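(* Fix $\Gamma z_0\in\mathcal M$. Let $x\in[0,1)$ be irrational with Diophantine exponent $\kappa_x>1$, and let $\{y_n\}_{n\in\mathbb N}$ be positive numbers with $y_n\asymp n^{-\beta}$ for some fixed $2<\beta<2\kappa_x$. Then $$\limsup_{n\to\infty}\frac{\inf_{\Gamma z\in\mathcal R_n(x,y_n)}d_{\mathcal M}(\Gamma z_0,\Gamma z)}{\log n}\ge\min\{2\kappa_x-\beta,\ \beta-2\}.$$
   Context: For $\kappa>0$, $x$ is primitive $n^{-\kappa}$-approximable if there are infinitely many $n\in\mathbb N$ such that some $m\in\mathbb Z$ with $\gcd(m,n)=1$ satisfies $|x-\tfrac mn|<n^{-\kappa-1}$; the Diophantine exponent $\kappa_x$ of an irrational $x$ is the supremum of $\kappa'>0$ for which $x$ is primitive $n^{-\kappa'}$-approximable. $\Gamma=\mathrm{SL}_2(\mathbb Z)$, $\mathcal M=\Gamma\backslash\mathbb H$, $d_{\mathcal M}(\Gamma z_1,\Gamma z_2)=\inf_{\gamma\in\Gamma}d_{\mathbb H}(\gamma z_1,z_2)$ with $d_{\mathbb H}$ the hyperbolic distance. $\mathcal R_n(x,y)=\{\Gamma(x+\tfrac jn+iy):0\le j\le n-1\}$. *)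

(* Defs.v *)
From HB Require Import structures.
From mathcomp Require Import all_boot all_order all_algebra.
From mathcomp Require Import all_classical all_reals all_analysis.
Set Implicit Arguments. Unset Strict Implicit. Unset Printing Implicit Defensive.
Import Order.TTheory GRing.Theory Num.Theory.
Local Open Scope classical_set_scope.
Local Open Scope ring_scope.

(* Points of the upper half-plane H are represented as pairs (Re z, Im z)
   with Im z > 0. *)

Definition SL2Z : set 'M[int]_2 := [set g | \det g = 1].

(* Moebius action (a z + b)/(c z + d) on z = u + i v, for det = 1:
   Re = ((a u + b)(c u + d) + a c v^2) / D,  Im = v / D,
   with D = (c u + d)^2 + (c v)^2 = |c z + d|^2. *)
Definition mob_act {R : realType} (g : 'M[int]_2) (z : R * R) : R * R :=
  let a := (g 0 0)%:~R in let b := (g 0 1)%:~R in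
  let c := (g 1 0)%:~R in let d := (g 1 1)%:~R in
  let u := z.1 in let v := z.2 in
  let D := (c * u + d) ^+ 2 + (c * v) ^+ 2 in
  (((a * u + b) * (c * u + d) + a * c * v ^+ 2) / D, v / D).

Definition arcosh {R : realType} (t : R) : R := ln (t + Num.sqrt (t ^+ 2 - 1)).

Definition dH {R : realType} (z w : R * R) : R :=
  arcosh (1 + ((z.1 - w.1) ^+ 2 + (z.2 - w.2) ^+ 2) / (2 * z.2 * w.2)).

Definition dM {R : realType} (z1 z2 : R * R) : R :=
  inf [set dH (mob_act g z1) z2 | g in SL2Z].

(* R_n(x,y) = { Gamma (x + j/n + i y) : 0 <= j <= n-1 }, given by representatives. *)
Definition Rn {R : realType} (n : nat) (x y : R) : set (R * R) :=
  [set (x + j%:R / n%:R, y) | j in [set j : nat | (j < n)%N]].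

Definition prim_approx {R : realType} (kappa x : R) : Prop :=
  forall N : nat, exists n : nat, (N < n)%N /\
    exists m : int, coprime `|m|%N n /\
      `|x - m%:~R / n%:R| < powR (n%:R) (- kappa - 1).

Definition dioph_exp {R : realType} (x : R) : \bar R :=
  ereal_sup [set (k%:E)%E | k in [set k : R | 0 < k /\ prim_approx k x]].

(* Main.v *)
Require Import Defs.
From mathcomp Require Import all_boot all_order all_algebra.
From mathcomp Require Import all_classical all_reals all_analysis.
From mathcomp Require Import ring lra zify.
Import Order.TTheory GRing.Theory Num.Theory.
Local Open Scope classical_set_scope.
Local Open Scope ring_scope.

Lemma lagr (R : realType) (u1 A u2 B s t : R) :
  (A*((s*u2+t)^+2 + (s*B)^+2) - B*((s*u1+t)^+2 + (s*A)^+2))^+2 <=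
  ((u1-u2)^+2 + (A-B)^+2) * ((s*u1+t)^+2 + (s*A)^+2) * ((s*u2+t)^+2 + (s*B)^+2).
Proof.
set P := (s*u1+t)^+2 + (s*A)^+2. set Q := (s*u2+t)^+2 + (s*B)^+2.
pose al := s*u1+t. pose be := s*u2+t.
pose E := al*be - s^+2*A*B. pose F := s*(A*be + B*al).
have -> : ((u1-u2)^+2 + (A-B)^+2) * P * Q = ((u1-u2)*E + (A-B)*F)^+2 + (A*Q - B*P)^+2.
  rewrite /P /Q /E /F /al /be; ring.
rewrite lerDr; exact: sqr_ge0.
Qed.


Lemma core (R : realType) (A B u1 u2 s t m0 : R) : 0 < A -> 0 < B -> s != 0 -> 0 < m0 ->
  A * m0 <= (s*u1+t)^+2 + (s*A)^+2 ->
  ln (B / ((s*u2+t)^+2 + (s*B)^+2) * m0 / 2) <=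
  arcosh (1 + ((u1 - u2)^+2 + (A - B)^+2) / (2 * A * B)).
Proof.
move=> A0 B0 s0 m00 hP.
set P := (s*u1+t)^+2 + (s*A)^+2. set Q := (s*u2+t)^+2 + (s*B)^+2.
set K := (u1 - u2)^+2 + (A - B)^+2.
have sA : 0 < (s*A)^+2 by rewrite exprn_even_gt0 // mulf_neq0 // gt_eqF.
have sB : 0 < (s*B)^+2 by rewrite exprn_even_gt0 // mulf_neq0 // gt_eqF.
have P0 : 0 < P by rewrite /P ltr_wpDl // sqr_ge0.
have Q0 : 0 < Q by rewrite /Q ltr_wpDl // sqr_ge0.
have hK := @lagr R u1 A u2 B s t; rewrite -/P -/Q -/K in hK.
have h1 : (A*Q - B*P)^+2 / (2*A*B*P*Q) <= K / (2*A*B).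
  have -> : K / (2*A*B) = K*P*Q / (2*A*B*P*Q) by field; rewrite !gt_eqF.
  by rewrite ler_pM2r // invr_gt0 !mulr_gt0.
have h2 : 1 + (A*Q - B*P)^+2 / (2*A*B*P*Q) = A*Q/(2*B*P) + B*P/(2*A*Q).
  by field; rewrite !gt_eqF.
have h3 : 0 <= A*Q/(2*B*P) by rewrite ltW // divr_gt0 // !mulr_gt0.
have h4 : B / Q * m0 / 2 <= B*P/(2*A*Q).
  have -> : B*P/(2*A*Q) = B / Q * m0 / 2 + B * (P - A * m0) / (2*A*Q) by field; rewrite !gt_eqF.
  by rewrite lerDl divr_ge0 ?mulr_ge0 // ?subr_ge0 // ltW // !mulr_gt0.
have hT : B / Q * m0 / 2 <= 1 + K / (2*A*B).
  apply: (le_trans h4); apply: (le_trans _ (lerD (lexx 1) h1)); by rewrite h2 lerDr.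
have Y0 : 0 < B / Q * m0 / 2 by rewrite !mulr_gt0 ?invr_gt0.
have T0 : 0 < 1 + K / (2*A*B) by apply: lt_le_trans hT.
rewrite /arcosh; apply: (le_trans _ (_ : ln (1 + K / (2*A*B)) <= _)).
  by rewrite ler_ln ?posrE.
by rewrite ler_ln ?posrE ?lerDl ?sqrtr_ge0 // ltr_wpDr // sqrtr_ge0.
Qed.

Lemma limn_esup_ge (R : realType) (u : nat -> \bar R) (r : \bar R) :
  (forall N, exists n, (N <= n)%N /\ (r <= u n)%E) -> (r <= limn_esup u)%E.
Proof.
move=> H; rewrite /limn_esup limf_esupE; apply/ereal_infP => _ [V hV <-].
case: hV => N _ HN.
have [n [Nn rn]] := H N.
apply: (le_trans rn); apply: ereal_sup_ubound; exists n => //; exact: HN.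
Qed.

Lemma le_from_below (R : realType) (l : R) (S : \bar R) :
  (forall r, r < l -> (r%:E <= S)%E) -> (l%:E <= S)%E.
Proof.
case: S => [s| |] H.
- rewrite lee_fin leNgt; apply/negP => sl.
  have := H ((s + l) / 2) ltac:(lra); rewrite lee_fin; lra.
- exact: leey.
- by have := H (l - 1) ltac:(lra).
Qed.

Lemma EFin_min (R : realType) (a b : R) : Order.min a%:E b%:E = (Order.min a b)%:E.
Proof. by rewrite /Order.min lte_fin; case: ifP. Qed.

Lemma logbound (R : realType) (nn a yn c1 c2 beta k m0 : R) :
  1 <= nn -> 0 < yn -> c1 * nn `^ (-beta) <= yn -> yn <= c2 * nn `^ (-beta) ->
  0 < c1 -> 0 < c2 -> `|a| < nn * nn `^ (-k - 1) -> 0 < m0 ->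
  Order.min (2*k - beta) (beta - 2) * ln nn
    - (`|ln c1| + `|ln c2| + 2 * ln 2 + `|ln m0|)
   <= ln (yn / (a^+2 + (nn * yn)^+2) * m0 / 2).
Proof.
move=> n1 y0 hy1 hy2 c10 c20 ha m00.
have n0 : 0 < nn by lra.
have ln0 : 0 <= ln nn by apply: ln_ge0.
have pb : 0 < nn `^ (-beta) by apply: powR_gt0.
have pk : 0 < nn `^ (-k-1) by apply: powR_gt0.
have ny0 : 0 < (nn * yn)^+2 by rewrite exprn_gt0 // mulr_gt0.
have Q0 : 0 < a^+2 + (nn * yn)^+2 by rewrite ltr_wpDl // sqr_ge0.
have ps : forall x : R, 0 < x -> x \is Num.pos by move=> x; rewrite posrE.
have lnY : ln (yn / (a^+2 + (nn * yn)^+2) * m0 / 2) =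
    ln yn - ln (a^+2 + (nn * yn)^+2) + ln m0 - ln 2.
  rewrite !lnM ?ps ?divr_gt0 ?mulr_gt0 ?invr_gt0 // !lnV ?ps //.
have l2 : 0 <= ln (2 : R) by apply: ln_ge0; lra.
have hc1 : ln c1 + (- beta) * ln nn <= ln yn.
  by rewrite -ln_powR -lnM ?ps ?mulr_gt0 // ler_ln ?ps ?mulr_gt0.
have hc2 : ln yn <= ln c2 + (- beta) * ln nn.
  by rewrite -ln_powR -lnM ?ps ?mulr_gt0 // ler_ln ?ps ?mulr_gt0.
have a1 := ler_norm (ln c1); have a2 := ler_norm (ln c2); have a3 := ler_norm (ln m0).
have b1 := lerNnormlW (lexx `|ln c1|); have b2 := lerNnormlW (lexx `|ln c2|).
have b3 := lerNnormlW (lexx `|ln m0|).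
set mu := Order.min (2*k - beta) (beta - 2).
have mu1 : mu * ln nn <= (2*k - beta) * ln nn by rewrite ler_wpM2r // ge_min lexx.
have mu2 : mu * ln nn <= (beta - 2) * ln nn by rewrite ler_wpM2r // ge_min lexx orbT.
rewrite lnY.
have [aa|aa] := leP (a^+2) ((nn * yn)^+2).
- have hQ : ln (a^+2 + (nn * yn)^+2) <= ln 2 + (2 * ln nn + 2 * ln yn).
    have -> : 2 * ln nn + 2 * ln yn = ln ((nn * yn)^+2).
      by rewrite lnXn ?mulr_gt0 // lnM ?ps // mulr2n; lra.
    rewrite -lnM ?ps //.
    by rewrite ler_ln ?ps ?mulr_gt0 //; lra.
  lra.
- have a0 : 0 < `|a|.
    rewrite normr_gt0; apply/eqP => a0; move: aa; rewrite a0 expr0n /=; lra.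
  have a2p : 0 < a^+2 by rewrite -real_normK ?num_real // exprn_gt0.
  have hQ : ln (a^+2 + (nn * yn)^+2) <= ln 2 + 2 * ln `|a|.
    have -> : 2 * ln `|a| = ln (a^+2).
      have -> : a ^+ 2 = `|a| ^+ 2 by rewrite real_normK ?num_real.
      by rewrite (lnXn 2 a0) mulr2n; lra.
    rewrite -lnM ?ps //.
    rewrite ler_ln; [|by rewrite ps|by rewrite ps // mulr_gt0].
    have -> : 2 * a^+2 = a^+2 + a^+2 by ring.
    by rewrite lerD2l ltW.
  have hA : ln `|a| < ln nn + (- k - 1) * ln nn.
    by rewrite -ln_powR -lnM ?ps // ltr_ln ?ps ?mulr_gt0.
  lra.
Qed.

Lemma sqz_ge1 (R : realType) (z : int) : z != 0 -> 1 <= (z%:~R : R)^+2.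
Proof.
move=> z0; rewrite -rmorphXn /= ler1z.
have : (0 < `|z|)%N by rewrite absz_gt0.
move: z z0 => [n|n] _ /=; rewrite ?NegzE; lia.
Qed.
Lemma det22 (g : 'M[int]_2) : \det g = g 0 0 * g 1 1 - g 0 1 * g 1 0.
Proof. rewrite (expand_det_row _ 0) big_ord_recl big_ord1 /cofactor !det_mx11 /=.
rewrite !mxE /= expr0 expr1 mul1r mulN1r mulrN.
have -> : lift (0:'I_2) (0:'I_1) = 1 by apply/val_inj.
have -> : lift (1:'I_2) (0:'I_1) = 0 by apply/val_inj.
done.
Qed.

Lemma D_pos (R : realType) (ar br cr dr u v : R) : 0 < v -> ar*dr - br*cr = 1 ->
  0 < (cr * u + dr) ^+ 2 + (cr * v) ^+ 2.
Proof.
move=> v0 hdr.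
rewrite lt_neqAle addr_ge0 ?sqr_ge0 // andbT eq_sym paddr_eq0 ?sqr_ge0 //.
apply/negP => /andP[]; rewrite !sqrf_eq0 mulf_eq0 (gt_eqF v0) orbF => h1 /eqP c0.
move: h1; rewrite c0 mul0r add0r => /eqP d0.
move: hdr; rewrite c0 d0 !mulr0 subr0 => /eqP; by rewrite eq_sym oner_eq0.
Qed.

Lemma mob_real (R : realType) (ar br cr dr u v S T : R) : 0 < v -> ar*dr - br*cr = 1 ->
  (S * (((ar * u + br) * (cr * u + dr) + ar * cr * v ^+ 2) / ((cr * u + dr) ^+ 2 + (cr * v) ^+ 2)) + T) ^+ 2
  + (S * (v / ((cr * u + dr) ^+ 2 + (cr * v) ^+ 2))) ^+ 2 =
  v / ((cr * u + dr) ^+ 2 + (cr * v) ^+ 2) / v *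
   (((S*ar + T*cr)*u + (S*br+T*dr))^+2 + ((S*ar+T*cr)*v)^+2).
Proof.
move=> v0 hdr; have D0 := @D_pos R ar br cr dr u v v0 hdr.
move: D0; set D := (cr * u + dr) ^+ 2 + (cr * v) ^+ 2 => D0.
set N := (ar * u + br) * (cr * u + dr) + ar * cr * v ^+ 2.
have key : (S*N + T*D)^+2 + (S*v*(ar*dr - br*cr))^+2 =
   D * (((S*ar + T*cr)*u + (S*br+T*dr))^+2 + ((S*ar+T*cr)*v)^+2).
  rewrite /D /N; ring.
rewrite hdr mulr1 in key.
have -> : (S * (N / D) + T) ^+ 2 + (S * (v / D)) ^+ 2 = ((S*N + T*D)^+2 + (S*v)^+2) / D^+2.
  by field; rewrite gt_eqF.
by rewrite key; field; rewrite !gt_eqF.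
Qed.

Lemma mob_bound (R : realType) (g : 'M[int]_2) (u v : R) (s t : int) :
  0 < v -> \det g = 1 -> s != 0 ->
  0 < (mob_act g (u, v)).2 /\
  (mob_act g (u, v)).2 * Num.min v v^-1 <=
  (s%:~R * (mob_act g (u, v)).1 + t%:~R)^+2 + (s%:~R * (mob_act g (u, v)).2)^+2.
Proof.
move=> v0 hg s0.
have hdi := hg; rewrite det22 in hdi.
have hdr := congr1 (fun z : int => z%:~R : R) hdi.
rewrite /= rmorphB !rmorphM /= in hdr.
have D0 := @D_pos R _ _ _ _ u v v0 hdr.
rewrite /mob_act /=.
split; first by rewrite divr_gt0.
rewrite mob_real //.
set H := (X in _ / _ / _ * X).
suff Hm : v * Num.min v v^-1 <= H.
  move: D0; set D := (X in 0 < X) => D0.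
  rewrite -[v / D / v * H]mulrA ler_wpM2l //; first by rewrite ltW // divr_gt0.
  by rewrite -(ler_pM2l v0) mulrA mulfV ?gt_eqF // mul1r.
have hs' : ((s * g 0 0 + t * g 1 0)%:~R : R) = s%:~R * (g 0 0)%:~R + t%:~R * (g 1 0)%:~R.
  by rewrite rmorphD !rmorphM.
have ht' : ((s * g 0 1 + t * g 1 1)%:~R : R) = s%:~R * (g 0 1)%:~R + t%:~R * (g 1 1)%:~R.
  by rewrite rmorphD !rmorphM.
have hinv : s = (s * g 0 0 + t * g 1 0) * g 1 1 - (s * g 0 1 + t * g 1 1) * g 1 0.
  have -> : (s * g 0 0 + t * g 1 0) * g 1 1 - (s * g 0 1 + t * g 1 1) * g 1 0
     = s * (g 0 0 * g 1 1 - g 0 1 * g 1 0) by ring.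
  by rewrite hdi mulr1.
rewrite /H -hs' -ht'.
have [s'0|s'0] := eqVneq (s * g 0 0 + t * g 1 0) 0.
  have t'0 : s * g 0 1 + t * g 1 1 != 0.
    apply/eqP => t'0; move: hinv; rewrite s'0 t'0 !mul0r subr0 => /eqP.
    by rewrite (negbTE s0).
  rewrite s'0 mul0r add0r mul0r expr0n /= addr0.
  apply: (@le_trans _ _ 1); last exact: sqz_ge1.
  have : Num.min v v^-1 <= v^-1 by rewrite ge_min lexx orbT.
  by move=> h; have := ler_wpM2l (ltW v0) h; rewrite mulfV ?gt_eqF.
apply: (@le_trans _ _ ((((s * g 0 0 + t * g 1 0)%:~R : R) * v)^+2)); last by rewrite lerDr sqr_ge0.
rewrite exprMn -[v * _]mulr1 mulrC.
have m0p : 0 < Num.min v v^-1 by rewrite lt_min v0 invr_gt0.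
apply: ler_pM; [exact: ler01| by rewrite mulr_ge0 // ltW | exact: sqz_ge1 |].
rewrite expr2; apply: ler_wpM2l; first exact: ltW.
by rewrite ge_min lexx.
Qed.

Lemma dM_lb (R : realType) (z0 : R * R) (zu B : R) (s t : int) :
  0 < z0.2 -> 0 < B -> s != 0 ->
  ln (B / ((s%:~R * zu + t%:~R)^+2 + (s%:~R * B)^+2) * Num.min z0.2 z0.2^-1 / 2)
  <= dM z0 (zu, B).
Proof.
move=> v0 B0 s0; rewrite /dM; apply: lb_le_inf.
  by exists (dH (mob_act 1%:M z0) (zu, B)), 1%:M => //; rewrite /SL2Z /= det1.
move=> _ [g hg <-]; case: z0 v0 => u v /= v0.
have [A0 hP] := @mob_bound R g u v s t v0 hg s0.
rewrite /dH /=; apply: core => //.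
- by rewrite intr_eq0.
- by rewrite lt_min v0 invr_gt0.
Qed.

Theorem theorem4p4 (R : realType) (z0 : R * R) (x beta : R) (y : nat -> R) :
  0 < z0.2 ->
  0 <= x < 1 -> irrational x ->
  (1%:E < dioph_exp x)%E ->
  (forall n : nat, (0 < n)%N -> 0 < y n) ->
  (exists c1 c2 : R, 0 < c1 /\ 0 < c2 /\
     forall n : nat, (0 < n)%N ->
       c1 * powR (n%:R) (- beta) <= y n /\ y n <= c2 * powR (n%:R) (- beta)) ->
  2 < beta -> (beta%:E < 2%:E * dioph_exp x)%E ->
  (Order.min (2%:E * dioph_exp x - beta%:E) (beta - 2)%:E <=
   limn_esup (fun n : nat =>
     ((inf [set dM z0 z | z in Rn n x (y n)]) / ln (n%:R))%:E))%E.
Proof.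
move=> v0 _ _ hd ypos [c1 [c2 [c10 [c20 hy]]]] b2 hbd.
have key : forall r : R, r < beta - 2 -> (((r + beta) / 2)%:E < dioph_exp x)%E ->
   (r%:E <= limn_esup (fun n : nat =>
     ((inf [set dM z0 z | z in Rn n x (y n)]) / ln (n%:R))%:E))%E.
  move=> r rb /ereal_sup_gt [_ [k [k0 hk] <-]]; rewrite lte_fin => rk.
  set mu := Order.min (2 * k - beta) (beta - 2).
  have rmu : r < mu by rewrite lt_min; apply/andP; split; lra.
  set m0 := Num.min z0.2 z0.2^-1.
  have m00 : 0 < m0 by rewrite lt_min v0 invr_gt0.
  set C := `|ln c1| + `|ln c2| + 2 * ln 2 + `|ln m0|.
  set T := `|C| / (mu - r) + 1.
  have T0 : 0 < T.
    rewrite /T; have : 0 <= `|C| / (mu - r) by rewrite divr_ge0 // subr_ge0 ltW.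
    lra.
  pose N0 := (Num.Def.trunc (expR T)).+1.
  apply: limn_esup_ge => N.
  have [n [Nn [m [_ hm]]]] := hk (maxn N N0).
  exists n; split; first exact: leq_trans (leq_maxl N N0) (ltnW Nn).
  have N0n : (N0 <= n)%N by exact: leq_trans (leq_maxr N N0) (ltnW Nn).
  have n0N : (0 < n)%N by apply: leq_trans N0n.
  have n1 : 1 <= (n%:R : R) by rewrite ler1n.
  have nR0 : 0 < (n%:R : R) by lra.
  have hT : T < ln (n%:R : R).
    have h1 : expR T < n%:R.
      apply: (lt_le_trans (truncnS_gt _)); by rewrite ler_nat.
    by rewrite -[X in X < _](expRK T) ltr_ln ?posrE ?expR_gt0.
  rewrite lee_fin ler_pdivlMr; last by lra.
  have hinf : mu * ln (n%:R) - C <= inf [set dM z0 z | z in Rn n x (y n)].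
    apply: lb_le_inf.
      exists (dM z0 (x + 0%:R / n%:R, y n)), (x + 0%:R / n%:R, y n) => //.
      by exists 0%N.
    move=> _ [z [j hj <-] <-].
    have yn0 := ypos n n0N.
    have nz : (n%:Z) != 0 by rewrite -lt0n.
    have := @dM_lb R z0 (x + j%:R / n%:R) (y n) (n%:Z) (- (m + j%:Z)) v0 yn0 nz.
    have -> : ((n%:Z)%:~R * (x + j%:R / n%:R) + (- (m + j%:Z))%:~R : R)
       = n%:R * x - m%:~R.
      rewrite rmorphN rmorphD /= -[((n%:Z)%:~R : R)]/(n%:R : R).
      rewrite -[((j%:Z)%:~R : R)]/(j%:R : R).
      by field; rewrite gt_eqF.
    rewrite -[((n%:Z)%:~R : R)]/(n%:R : R).
    apply: le_trans; apply: logbound => //.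
    - by have [] := hy n n0N.
    - by have [] := hy n n0N.
    - have -> : n%:R * x - m%:~R = n%:R * (x - m%:~R / n%:R) :> R.
        by field; rewrite gt_eqF.
      by rewrite normrM gtr0_norm // ltr_pM2l.
  apply: le_trans hinf.
  have h1 : (mu - r) * T <= (mu - r) * ln (n%:R).
    by rewrite ler_wpM2l // ?subr_ge0 ?ltW.
  have h2 : (mu - r) * T = `|C| + (mu - r).
    by rewrite /T; field; rewrite gt_eqF // subr_gt0.
  have h3 := ler_norm C.
  lra.
move: key hd hbd; case: (dioph_exp x) => [d| |] key hd hbd.
- rewrite -EFinM -EFinB EFin_min.
  apply: le_from_below => r; rewrite lt_min => /andP[h1 h2].
  apply: key => //; rewrite lte_fin; move: h1; lra.
- rewrite gt0_muley ?lte_fin // addye //.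
  rewrite /Order.min ltNge leey /=.
  apply: le_from_below => r h; apply: key => //; exact: ltey.
- by move: hd; rewrite ltNge leNye.
Qed.
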